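(* Let $R$ be a ring. Then $R$ is feckly clean if and only if for any disjoint compact subsets $A,B$ of $\operatorname{Max}(R)$ there exists $e\in R$ such that $A\subseteq V(e)$, $B\subseteq V(1-e)$ and $eR(1-e)\subseteq J(R)$.
   Context: Rings are associative with identity, not necessarily commutative; $J(R)$ is the Jacobson radical. An element $u\in R$ is full if $RuR=R$. An element $a\in R$ is feckly clean if there exist $e\in R$ and a full element $u\in R$ with $a=e+u$ and $eR(1-e)\subseteq J(R)$; $R$ is feckly clean if every element is feckly clean. $\operatorname{Max}(R)$ is the set of all maximal (two-sided) ideals of $R$, topologized so that the closed sets are exactly the sets $V(I)=\{P\in\operatorname{Max}(R): I\subseteq P\}$ for ideals $I$ of $R$. For $a\in R$, $V(a)=V(RaR)$. *)

(* Defs.v *)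
(* Rings: associative with identity, not necessarily commutative
   (pzRingType: the zero ring is allowed). Subsets are Prop-valued predicates. *)
From HB Require Import structures.
From mathcomp Require Import all_boot all_order all_algebra.
Set Implicit Arguments. Unset Strict Implicit. Unset Printing Implicit Defensive.
Import GRing.Theory.
Local Open Scope ring_scope.

Section Defs.
Variable R : pzRingType.

Definition is_ideal (I : R -> Prop) : Prop :=
  [/\ I 0, (forall x y, I x -> I y -> I (x + y)),
      (forall r x, I x -> I (r * x)) & (forall r x, I x -> I (x * r))].

Definition is_left_ideal (L : R -> Prop) : Prop :=
  [/\ L 0, (forall x y, L x -> L y -> L (x + y)) & (forall r x, L x -> L (r * x))].

Definition proper (I : R -> Prop) : Prop := exists x, ~ I x.

Definition maximal_ideal (P : R -> Prop) : Prop :=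
  [/\ is_ideal P, proper P &
      forall I, is_ideal I -> (forall x, P x -> I x) -> proper I ->
        forall x, I x -> P x].

Definition maximal_left_ideal (L : R -> Prop) : Prop :=
  [/\ is_left_ideal L, proper L &
      forall I, is_left_ideal I -> (forall x, L x -> I x) -> proper I ->
        forall x, I x -> L x].

Definition jacobson (x : R) : Prop :=
  forall L, maximal_left_ideal L -> L x.

(* RaR : the two-sided ideal generated by a (finite sums of r a s) *)
Definition RaR (a : R) (x : R) : Prop :=
  exists n (r s : 'I_n -> R), x = \sum_(i < n) r i * a * s i.

Definition full (u : R) : Prop := forall x, RaR u x.

Definition corner_in_J (e : R) : Prop := forall r, jacobson (e * r * (1 - e)).

Definition feckly_clean_elt (a : R) : Prop :=
  exists e u, a = e + u /\ full u /\ corner_in_J e.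

Definition feckly_clean : Prop := forall a, feckly_clean_elt a.

Definition subset_Max (A : (R -> Prop) -> Prop) : Prop :=
  forall P, A P -> maximal_ideal P.

Definition V (I : R -> Prop) (P : R -> Prop) : Prop :=
  maximal_ideal P /\ forall x, I x -> P x.

Definition Va (a : R) := V (RaR a).

(* Compactness for the topology whose closed sets are the V(I), I ideal:
   every cover of A by open sets Max(R) \ V(I k) has a finite subcover. *)
Definition compact (A : (R -> Prop) -> Prop) : Prop :=
  forall (K : Type) (I : K -> (R -> Prop)),
    (forall k, is_ideal (I k)) ->
    (forall P, A P -> exists k, ~ V (I k) P) ->
    exists (n : nat) (ks : 'I_n -> K), forall P, A P -> exists i, ~ V (I (ks i)) P.

Definition disjoint_sets (A B : (R -> Prop) -> Prop) : Prop :=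
  forall P, A P -> B P -> False.

End Defs.

(* Main.v *)
Require Import Defs.
From mathcomp Require Import all_boot all_order all_algebra.
From mathcomp Require boolp classical_sets.
Set Implicit Arguments. Unset Strict Implicit. Unset Printing Implicit Defensive.
Import GRing.Theory.
Local Open Scope ring_scope.

Lemma NNPP' (P : Prop) : ~ ~ P -> P.
Proof. by case: (boolp.pselect P) => // HP /(_ HP). Qed.

Lemma zorn_gen (T : Type) (Q : (T -> Prop) -> Prop) (I0 : T -> Prop) :
  Q I0 ->
  (forall F : (T -> Prop) -> Prop, (forall X, F X -> Q X /\ (forall x, I0 x -> X x)) ->
     (forall X Y, F X -> F Y -> (forall x, X x -> Y x) \/ (forall x, Y x -> X x)) ->
     (exists X, F X) -> Q (fun x => exists2 X, F X & X x)) ->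
  exists M, [/\ Q M, (forall x, I0 x -> M x) &
    forall N, Q N -> (forall x, M x -> N x) -> forall x, N x -> M x].
Proof.
move=> QI0 Hch.
pose P := fun X : T -> Prop => (forall x, ~ X x) \/ (Q X /\ (forall x, I0 x -> X x)).
have [] := @classical_sets.Zorn_bigcup T P.
  move=> F FP Ftot; rewrite /classical_sets.bigcup /=.
  case: (boolp.pselect (exists X, F X /\ Q X /\ (forall x, I0 x -> X x))).
    move=> [X0 [FX0 [QX0 IX0]]]; right.
    pose F' := fun X => F X /\ Q X /\ (forall x, I0 x -> X x).
    have -> : (fun a => exists2 i, F i & i a) = (fun x => exists2 X, F' X & X x).
      apply: boolp.funext => a; apply: boolp.propext; split.
        move=> [X FX Xa]; exists X => //; split => //.
        by case: (FP X FX) => [/(_ a)//|[]].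
      by move=> [X [FX _] Xa]; exists X.
    split.
      apply: Hch; first by move=> X [_ []].
        move=> X Y [FX _] [FY _]; exact: Ftot.
      by exists X0.
    by move=> x Ix; exists X0 => //; exact: IX0.
  move=> Hno; left => x [X FX Xx].
  case: (FP X FX) => [/(_ x)//|[QX IX]]; apply: Hno; by exists X.
move=> A [PA Amax].
case: PA => [Aempty|[QA IA]].
  exists I0; split => // N QN IN x Nx; exfalso.
  apply: (Amax N); last by right.
  split; first by move=> t /Aempty.
  by move=> /(_ x Nx) /Aempty.
exists A; split => // N QN AN x Nx; apply: NNPP' => nAx.
apply: (Amax N); last by right; split => // t /IA /AN.
split => //; by move=> /(_ x Nx).
Qed.

Section Aux.
Variable R : pzRingType.


Lemma ideal_all (Id : R -> Prop) : is_ideal Id -> Id 1 -> forall x, Id x.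
Proof. by case=> _ _ _ Hr H1 x; rewrite -(mul1r x); apply: Hr. Qed.

Lemma ideal_opp (Id : R -> Prop) x : is_ideal Id -> Id x -> Id (- x).
Proof. by case=> _ _ Hl _ Hx; rewrite -mulN1r; apply: Hl. Qed.

Lemma ideal_sub (Id : R -> Prop) x y : is_ideal Id -> Id x -> Id y -> Id (x - y).
Proof. move=> HI Hx Hy; case: (HI) => _ Ha _ _; apply: Ha => //; exact: ideal_opp. Qed.

Lemma ideal_sum (Id : R -> Prop) n (F : 'I_n -> R) :
  is_ideal Id -> (forall i, Id (F i)) -> Id (\sum_(i < n) F i).
Proof. by case=> H0 Ha _ _ HF; apply: big_ind. Qed.

Lemma ideal_proper (Id : R -> Prop) : is_ideal Id -> Defs.proper Id <-> ~ Id 1.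
Proof.
move=> HI; split; first by case=> x Hx H1; apply: Hx; apply: ideal_all.
by move=> H1; exists 1.
Qed.

Definition gen (G : R -> Prop) (x : R) : Prop :=
  exists n (r s g : 'I_n -> R), (forall i, G (g i)) /\ x = \sum_(i < n) r i * g i * s i.

Definition ocat m n (f1 : 'I_m -> R) (f2 : 'I_n -> R) (i : 'I_(m + n)) : R :=
  match split i with inl j => f1 j | inr j => f2 j end.

Lemma ocatL m n f1 f2 (j : 'I_m) : @ocat m n f1 f2 (lshift n j) = f1 j.
Proof. by rewrite /ocat (unsplitK (inl _ j)). Qed.
Lemma ocatR m n f1 f2 (j : 'I_n) : @ocat m n f1 f2 (rshift m j) = f2 j.
Proof. by rewrite /ocat (unsplitK (inr _ j)). Qed.

Lemma gen_ideal G : is_ideal (gen G).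
Proof.
split.
- exists 0%N, (fun _ => 0), (fun _ => 0), (fun _ => 0); split; first by case.
  by rewrite big_ord0.
- move=> x y [m [r1 [s1 [g1 [Hg1 ->]]]]] [n [r2 [s2 [g2 [Hg2 ->]]]]].
  exists (m + n)%N, (ocat r1 r2), (ocat s1 s2), (ocat g1 g2); split.
    by move=> i; rewrite /ocat; case: (split i).
  by rewrite big_split_ord /=; congr (_ + _); apply: eq_bigr => i _;
    rewrite ?ocatL ?ocatR.
- move=> c x [m [r1 [s1 [g1 [Hg1 ->]]]]].
  exists m, (fun i => c * r1 i), s1, g1; split => //.
  by rewrite mulr_sumr; apply: eq_bigr => i _; rewrite !mulrA.
- move=> c x [m [r1 [s1 [g1 [Hg1 ->]]]]].
  exists m, r1, (fun i => s1 i * c), g1; split => //.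
  by rewrite mulr_suml; apply: eq_bigr => i _; rewrite !mulrA.
Qed.

Lemma gen_in (G : R -> Prop) x : G x -> gen G x.
Proof.
move=> Gx; exists 1%N, (fun _ => 1), (fun _ => 1), (fun _ => x); split => //.
by rewrite big_ord1 mul1r mulr1.
Qed.

Lemma gen_sub (G J : R -> Prop) : is_ideal J -> (forall x, G x -> J x) ->
  forall x, gen G x -> J x.
Proof.
move=> HJ HG x [n [r [s [g [Hg ->]]]]]; apply: ideal_sum => // i.
case: HJ => _ _ Hl Hr; apply: Hr; apply: Hl; exact: HG.
Qed.

Lemma RaR_gen a x : RaR a x <-> gen (eq a) x.
Proof.
split.
  by move=> [n [r [s ->]]]; exists n, r, s, (fun _ => a).
move=> [n [r [s [g [Hg ->]]]]]; exists n, r, s.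
by apply: eq_bigr => i _; rewrite -Hg.
Qed.


Lemma ideal_chain (F : (R -> Prop) -> Prop) :
  (forall X, F X -> is_ideal X /\ ~ X 1) ->
  (forall X Y, F X -> F Y -> (forall x, X x -> Y x) \/ (forall x, Y x -> X x)) ->
  (exists X, F X) ->
  is_ideal (fun x => exists2 X, F X & X x) /\ ~ (exists2 X, F X & X 1).
Proof.
move=> HF Ht [X0 FX0]; split; last by move=> [X /HF [_ ?]].
split.
- by exists X0 => //; case: (HF _ FX0) => [[]].
- move=> x y [X FX Xx] [Y FY Yy].
  case: (Ht X Y FX FY) => H.
    by exists Y => //; case: (HF _ FY) => [[_ Ha _ _] _]; apply: Ha => //; exact: H.
  by exists X => //; case: (HF _ FX) => [[_ Ha _ _] _]; apply: Ha => //; exact: H.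
- by move=> r x [X FX Xx]; exists X => //; case: (HF _ FX) => [[_ _ Hl _] _]; exact: Hl.
- by move=> r x [X FX Xx]; exists X => //; case: (HF _ FX) => [[_ _ _ Hr] _]; exact: Hr.
Qed.

Lemma max_ideal_exists (I0 : R -> Prop) : is_ideal I0 -> ~ I0 1 ->
  exists P, maximal_ideal P /\ forall x, I0 x -> P x.
Proof.
move=> HI0 nI0.
have [] := @zorn_gen R (fun X => is_ideal X /\ ~ X 1) I0 (conj HI0 nI0).
  move=> F HF Ht Hne; apply: ideal_chain => // X FX; exact: (proj1 (HF X FX)).
move=> M [[HM nM] IM Mmax]; exists M; split => //; split => //.
  by apply/ideal_proper.
move=> Id HId MId /(ideal_proper HId) nId; exact: Mmax.
Qed.

Lemma left_proper (L : R -> Prop) : is_left_ideal L -> Defs.proper L <-> ~ L 1.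
Proof.
move=> [_ _ Hl]; split; first by case=> x Hx H1; apply: Hx; rewrite -(mulr1 x); apply: Hl.
by move=> H1; exists 1.
Qed.

Lemma max_left_exists (I0 : R -> Prop) : is_left_ideal I0 -> ~ I0 1 ->
  exists L, maximal_left_ideal L /\ forall x, I0 x -> L x.
Proof.
move=> HI0 nI0.
have [] := @zorn_gen R (fun X => is_left_ideal X /\ ~ X 1) I0 (conj HI0 nI0).
  move=> F HF Ht [X0 FX0]; split; last by move=> [X /HF [[_ ?] _]].
  split.
  - by exists X0 => //; case: (HF _ FX0) => [[[]]].
  - move=> x y [X FX Xx] [Y FY Yy].
    case: (Ht X Y FX FY) => H.
      by exists Y => //; case: (HF _ FY) => [[[_ Ha _] _] _]; apply: Ha => //; exact: H.
    by exists X => //; case: (HF _ FX) => [[[_ Ha _] _] _]; apply: Ha => //; exact: H.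
  - by move=> r x [X FX Xx]; exists X => //; case: (HF _ FX) => [[[_ _ Hl] _] _]; exact: Hl.
move=> M [[HM nM] IM Mmax]; exists M; split => //; split => //.
  by apply/left_proper.
move=> Id HId MId /(left_proper HId) nId; exact: Mmax.
Qed.

Lemma colon_max (L : R -> Prop) s : maximal_left_ideal L -> ~ L s ->
  maximal_left_ideal (fun y => L (y * s)).
Proof.
move=> [[L0 La Ll] Lp Lmax] nLs.
have HL : is_left_ideal L by [].
split.
- split; first by rewrite mul0r.
    by move=> x y Hx Hy; rewrite mulrDl; apply: La.
  by move=> r x Hx; rewrite -mulrA; apply: Ll.
- by exists 1; rewrite mul1r.
move=> Id [I0' Ia Il] Isub Ip y Iy.
pose L' := fun z => exists l i, [/\ L l, Id i & z = l + i * s].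
have HL' : is_left_ideal L'.
  split.
  - by exists 0, 0; split => //; rewrite mul0r addr0.
  - move=> x z [l1 [i1 [Hl1 Hi1 ->]]] [l2 [i2 [Hl2 Hi2 ->]]].
    exists (l1 + l2), (i1 + i2); split; [exact: La|exact: Ia|].
    by rewrite mulrDl addrACA.
  - move=> r x [l1 [i1 [Hl1 Hi1 ->]]]; exists (r * l1), (r * i1); split.
    + exact: Ll.
    + exact: Il.
    + by rewrite mulrDr mulrA.
have LL' : forall x, L x -> L' x.
  by move=> x Lx; exists x, 0; split => //; rewrite mul0r addr0.
case: (boolp.pselect (Defs.proper L')) => HpL'.
  apply: (Lmax L' HL' LL' HpL'); exists 0, y; split => //; by rewrite add0r.
case: Ip => w nIw; exfalso; apply: nIw.
have : L' (w * s).
  apply: NNPP' => nw; apply: HpL'; by exists (w * s).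
move=> [l [i [Hl Hi Heq]]].
have Hwi : Id (w - i).
  apply: Isub; rewrite mulrBl Heq addrK //.
have -> : w = (w - i) + i by rewrite subrK.
exact: Ia.
Qed.

Lemma jacobson_max (P : R -> Prop) x : maximal_ideal P -> jacobson x -> P x.
Proof.
move=> [HP Pp Pmax] Jx.
have HPl : is_left_ideal P by case: HP => ? ? ? ?; split.
have [L [HL PL]] := max_left_exists HPl (proj1 (ideal_proper HP) Pp).
have HLl := HL; case: HLl => [[L0 La Ll] Lp _].
have nL1 := proj1 (left_proper (let: And3 h _ _ := HL in h)) Lp.
pose A := fun r => forall t, L (r * t).
have HA : is_ideal A.
  split.
  - by move=> t; rewrite mul0r.
  - by move=> a b Ha Hb t; rewrite mulrDl; apply: La.
  - by move=> r a Ha t; rewrite -mulrA; apply: Ll.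
  - by move=> r a Ha t; rewrite -mulrA; apply: Ha.
apply: (Pmax A HA).
- by move=> p Pp' t; apply: PL; case: HP => _ _ _ Hr; apply: Hr.
- by exists 1 => /(_ 1); rewrite mulr1.
move=> t; case: (boolp.pselect (L t)) => Lt.
  exact: Ll.
exact: (Jx _ (colon_max HL Lt)).
Qed.

Lemma sum_ideal (X Y : R -> Prop) : is_ideal X -> is_ideal Y ->
  is_ideal (fun z => exists x y, [/\ X x, Y y & z = x + y]).
Proof.
move=> [X0 Xa Xl Xr] [Y0 Ya Yl Yr]; split.
- by exists 0, 0; split => //; rewrite addr0.
- move=> a b [x1 [y1 [H1 H2 ->]]] [x2 [y2 [H3 H4 ->]]].
  by exists (x1 + x2), (y1 + y2); split; [exact: Xa|exact: Ya|rewrite addrACA].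
- move=> r a [x1 [y1 [H1 H2 ->]]]; exists (r * x1), (r * y1); split.
  + exact: Xl. + exact: Yl. + by rewrite mulrDr.
- move=> r a [x1 [y1 [H1 H2 ->]]]; exists (x1 * r), (y1 * r); split.
  + exact: Xr. + exact: Yr. + by rewrite mulrDl.
Qed.

Lemma not_proper_all (Id : R -> Prop) : ~ Defs.proper Id -> forall x, Id x.
Proof. by move=> Hp x; apply: NNPP' => nx; apply: Hp; exists x. Qed.

Lemma max_proper1 (P : R -> Prop) : maximal_ideal P -> ~ P 1.
Proof. by case=> HP Pp _; apply/ideal_proper. Qed.

Lemma dichotomy (P : R -> Prop) e : maximal_ideal P -> corner_in_J e ->
  P e \/ P (1 - e).
Proof.
move=> HPm He; have HPm' := HPm; case: HPm' => HP Pp Pmax.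
case: (boolp.pselect (P e)) => Pe; [by left|right].
pose K := fun z => exists x y, [/\ P x, gen (eq e) y & z = x + y].
have HK : is_ideal K := sum_ideal HP (gen_ideal (eq e)).
have nK : ~ Defs.proper K.
  move=> Kp; apply: Pe; apply: (Pmax K HK) => //.
    by move=> x Px; exists x, 0; split => //; [case: (gen_ideal (eq e))|rewrite addr0].
  by exists 0, e; split; [case: HP|exact: gen_in|rewrite add0r].
have [p [y [Pp' [n [r [s [g [Hg Hy]]]]] H1]]] := not_proper_all nK 1.
have -> : 1 - e = p * (1 - e) + y * (1 - e) by rewrite -mulrDl -H1 mul1r.
case: (HP) => _ Pa _ Pr; apply: Pa; first exact: Pr.
rewrite Hy mulr_suml; apply: ideal_sum => // i.
have -> : r i * g i * s i * (1 - e) = r i * (e * s i * (1 - e)) by rewrite -Hg !mulrA.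
case: HP => _ _ Pl _; apply: Pl; exact: jacobson_max.
Qed.

Lemma prod_in (Id : R -> Prop) (I : eqType) (r : seq I) (c : I -> R) i0 :
  is_ideal Id -> i0 \in r -> Id (c i0) -> Id (\prod_(i <- r) c i).
Proof.
move=> [_ _ Hl Hr]; elim: r => [//|x r IH]; rewrite inE big_cons => /orP [/eqP <-|Hin] Hc.
  exact: Hr.
by apply: Hl; apply: IH.
Qed.

Lemma prod_one (Id : R -> Prop) (I : Type) (r : seq I) (c : I -> R) :
  is_ideal Id -> (forall i, Id (1 - c i)) -> Id (1 - \prod_(i <- r) c i).
Proof.
move=> HId Hc; have HId' := HId; case: HId' => H0 Ha Hl Hr; elim: r => [|x r IH].
  by rewrite big_nil subrr.
rewrite big_cons.
have -> : 1 - c x * \prod_(j <- r) c j = (1 - c x) + c x * (1 - \prod_(j <- r) c j).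
  by rewrite mulrBr mulr1 addrA subrK.
apply: Ha => //; exact: Hl.
Qed.

Lemma Va_of (P : R -> Prop) e : maximal_ideal P -> P e -> Va e P.
Proof.
move=> HP Pe; split => // x /RaR_gen; apply: gen_sub => //; first by case: HP.
by move=> y <-.
Qed.

Lemma Va_elim (P : R -> Prop) e : Va e P -> P e.
Proof. by move=> [_ H]; apply: H; apply/RaR_gen; exact: gen_in. Qed.

Lemma full_notin (P : R -> Prop) u : maximal_ideal P -> full u -> ~ P u.
Proof.
move=> HP Hu Pu; apply: (max_proper1 HP).
have := Hu 1 => /RaR_gen; apply: gen_sub; first by case: HP.
by move=> y <-.
Qed.

Lemma fc_sep : feckly_clean R -> forall x : R, exists e : R, corner_in_J e /\
  forall P, maximal_ideal P -> (P x -> P e) /\ (P (1 - x) -> P (1 - e)).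
Proof.
move=> Hfc x; have [e [u [Ha [Hu He]]]] := Hfc (1 - x).
exists e; split => // P HP.
have HPi : is_ideal P by case: HP.
have Hu1 : u = (1 - x) - e by rewrite Ha (addrC e) addrK.
have nPu := full_notin HP Hu.
split => Hx.
  case: (dichotomy HP He) => // P1e; exfalso; apply: nPu.
  rewrite Hu1 addrAC; exact: ideal_sub.
case: (dichotomy HP He) => // Pe; exfalso; apply: nPu.
rewrite Hu1; exact: ideal_sub.
Qed.

Lemma RaR_1 (u x : R) : RaR u 1 -> RaR u x.
Proof.
move=> [n [r [s E]]]; exists n, r, (fun i => s i * x).
have -> : \sum_(i < n) r i * u * (s i * x) = (\sum_(i < n) r i * u * s i) * x.
  by rewrite mulr_suml; apply: eq_bigr => i _; rewrite mulrA.
by rewrite -E mul1r.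
Qed.

Lemma Va_compact (c : R) : compact (Va c).
Proof.
move=> K I HI Hcov.
case: (boolp.pselect (exists k : K, True)) => [[k0 _]|nK]; last first.
  have f : 'I_0 -> K by case=> m Hm; exfalso; rewrite ltn0 in Hm.
  exists 0%N, f => P HP; exfalso; have [k _] := Hcov P HP; apply: nK; by exists k.
pose G := fun x => x = c \/ exists k, I k x.
case: (boolp.pselect (gen G 1)) => [[n [r [s [g [Hg E]]]]]|nG]; last first.
  have [P [HP Psub]] := max_ideal_exists (gen_ideal G) nG.
  have VP : Va c P by apply: Va_of => //; apply: Psub; apply: gen_in; left.
  have [k nV] := Hcov P VP; exfalso; apply: nV; split => // x Ix.
  by apply: Psub; apply: gen_in; right; exists k.
have Hex : forall i, exists k, g i = c \/ I k (g i).
  move=> i; case: (Hg i) => [->|[k Ik]]; first by exists k0; left.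
  by exists k; right.
exists n, (fun i => projT1 (boolp.cid (Hex i))) => P VP.
apply: NNPP' => nex.
have Hall : forall i, V (I (projT1 (boolp.cid (Hex i)))) P.
  by move=> i; apply: NNPP' => nV; apply: nex; exists i.
have HP : maximal_ideal P by case: VP.
apply: (max_proper1 HP); rewrite E; apply: ideal_sum; first by case: HP.
move=> i; case: HP => [[_ _ Pl Pr] _ _]; apply: Pr; apply: Pl.
case: (projT2 (boolp.cid (Hex i))) => [->|Ik]; first exact: Va_elim VP.
by case: (Hall i) => _; apply.
Qed.

End Aux.

Theorem corollary2p4 (R : pzRingType) :
  feckly_clean R <->
  (forall A B : (R -> Prop) -> Prop,
     subset_Max A -> subset_Max B -> compact A -> compact B -> disjoint_sets A B ->
     exists e : R,
       (forall P, A P -> Va e P) /\ (forall P, B P -> Va (1 - e) P) /\ corner_in_J e).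
Proof.
split.
- move=> Hfc A B sA sB cA cB dAB.
  have step1 : forall P Q, A P -> B Q ->
      exists e : R, corner_in_J e /\ P e /\ Q (1 - e).
    move=> P Q AP BQ.
    have HP := sA P AP; have HQ := sB Q BQ.
    have HPi : is_ideal P by case: HP.
    have HQi : is_ideal Q by case: HQ.
    have [p [Pp nQp]] : exists p, P p /\ ~ Q p.
      apply: NNPP' => nex.
      have PQ : forall x, P x -> Q x.
        by move=> x Px; apply: NNPP' => nQx; apply: nex; exists x.
      have QP : forall x, Q x -> P x.
        case: HP => _ _ Pmax; apply: Pmax => //; by case: HQ.
      have EPQ : P = Q.
        by apply: boolp.funext => x; apply: boolp.propext; split; [apply: PQ|apply: QP].
      by apply: (dAB P) => //; rewrite EPQ.
    pose K := fun z => exists x y, [/\ Q x, P y & z = x + y].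
    have HK : is_ideal K := sum_ideal HQi HPi.
    have nK : ~ Defs.proper K.
      move=> Kp; apply: nQp; case: HQ => _ _ Qmax; apply: (Qmax K HK) => //.
        by move=> x Qx; exists x, 0; split => //; [case: HPi|rewrite addr0].
      by exists 0, p; split => //; [case: HQi|rewrite add0r].
    have [q [y [Qq Py H1]]] := not_proper_all nK 1.
    have [e [He Hsep]] := fc_sep Hfc y.
    exists e; split => //; split; first exact: (proj1 (Hsep P HP)).
    apply: (proj2 (Hsep Q HQ)); by rewrite H1 addrK.
  have step2 : forall P, A P -> exists g : R, corner_in_J g /\ P g /\
      forall Q, B Q -> Q (1 - g).
    move=> P AP; have HP := sA P AP.
    pose K := {e : R | corner_in_J e /\ P e}.
    have [n [ks Hks]] : exists (n : nat) (ks : 'I_n -> K), forall Q, B Q ->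
        exists i, ~ V (gen (eq (sval (ks i)))) Q.
      apply: (cB K (fun k => gen (eq (sval k)))); first by move=> k; exact: gen_ideal.
      move=> Q BQ; have [e [He [Pe Q1e]]] := step1 P Q AP BQ.
      exists (exist _ e (conj He Pe)) => /= [[HQ Hsub]].
      apply: (max_proper1 HQ).
      have -> : (1 : R) = e + (1 - e) by rewrite addrC subrK.
      case: HQ => [[_ Qa _ _] _ _]; apply: Qa => //; apply: Hsub; exact: gen_in.
    pose g0 := 1 - \prod_(i < n) (1 - sval (ks i)).
    have [g [Hg Hsep]] := fc_sep Hfc g0.
    exists g; split => //; split.
      apply: (proj1 (Hsep P HP)); apply: prod_one; first by case: HP.
      by move=> i; rewrite subKr; exact: (proj2 (svalP (ks i))).
    move=> Q BQ; have HQ := sB Q BQ; apply: (proj2 (Hsep Q HQ)).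
    have [i nV] := Hks Q BQ.
    have nQ : ~ Q (sval (ks i)).
      move=> Qk; apply: nV; split => //; apply: gen_sub; first by case: HQ.
      by move=> y <-.
    rewrite /g0 subKr; apply: (prod_in (i0 := i)); first by case: HQ.
      exact: mem_index_enum.
    by case: (dichotomy HQ (proj1 (svalP (ks i)))).
  pose K := {g : R | corner_in_J g /\ forall Q, B Q -> Q (1 - g)}.
  have [n [ks Hks]] : exists (n : nat) (ks : 'I_n -> K), forall P, A P ->
      exists i, ~ V (gen (eq (1 - sval (ks i)))) P.
    apply: (cA K (fun k => gen (eq (1 - sval k)))); first by move=> k; exact: gen_ideal.
    move=> P AP; have [g [Hg [Pg HQ]]] := step2 P AP.
    exists (exist _ g (conj Hg HQ)) => /= [[HP Hsub]].
    apply: (max_proper1 HP).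
    have -> : (1 : R) = g + (1 - g) by rewrite addrC subrK.
    case: HP => [[_ Pa _ _] _ _]; apply: Pa => //; apply: Hsub; exact: gen_in.
  pose x := \prod_(i < n) sval (ks i).
  have [e [He Hsep]] := fc_sep Hfc x.
  exists e; split; last split => //.
    move=> P AP; have HP := sA P AP; apply: Va_of => //; apply: (proj1 (Hsep P HP)).
    have [i nV] := Hks P AP.
    have nP : ~ P (1 - sval (ks i)).
      move=> Pk; apply: nV; split => //; apply: gen_sub; first by case: HP.
      by move=> y <-.
    apply: (prod_in (i0 := i)); first by case: HP.
      exact: mem_index_enum.
    by case: (dichotomy HP (proj1 (svalP (ks i)))).
  move=> Q BQ; have HQ := sB Q BQ; apply: Va_of => //; apply: (proj2 (Hsep Q HQ)).
  apply: prod_one; first by case: HQ.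
  by move=> i; exact: (proj2 (svalP (ks i)) Q BQ).
- move=> Hsep a.
  have HVa : forall c : R, subset_Max (Va c) by move=> c P [].
  have dis : disjoint_sets (Va (1 - a)) (Va a).
    move=> P V1 V2; have HP := proj1 V1; apply: (max_proper1 HP).
    have -> : (1 : R) = (1 - a) + a by rewrite subrK.
    by case: HP => [[_ Pa _ _] _ _]; apply: Pa; apply: Va_elim.
  have [e [H1 [H2 He]]] := Hsep (Va (1 - a)) (Va a) (HVa _) (HVa _)
    ltac:(exact: Va_compact) ltac:(exact: Va_compact) dis.
  exists e, (a - e); split; first by rewrite addrC subrK.
  split => //.
  apply: NNPP' => nfull.
  have n1 : ~ RaR (a - e) 1.
    by move=> H; apply: nfull => x; exact: RaR_1.
  have ng : ~ gen (eq (a - e)) 1 by move=> /RaR_gen.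
  have [P [HP Psub]] := max_ideal_exists (gen_ideal _) ng.
  have Pu : P (a - e) by apply: Psub; exact: gen_in.
  have HPi : is_ideal P by case: HP.
  apply: (max_proper1 HP); case: (dichotomy HP He) => Pe.
    have Pa : P a.
      have -> : a = (a - e) + e by rewrite subrK.
      by case: HPi => _ Pa _ _; apply: Pa.
    have P1e := Va_elim (H2 P (Va_of HP Pa)).
    have -> : (1 : R) = e + (1 - e) by rewrite addrC subrK.
    by case: HPi => _ Pa' _ _; apply: Pa'.
  have P1a : P (1 - a).
    have -> : 1 - a = (1 - e) - (a - e) by rewrite opprB addrA subrK.
    exact: ideal_sub.
  have Pe' := Va_elim (H1 P (Va_of HP P1a)).
  have -> : (1 : R) = e + (1 - e) by rewrite addrC subrK.
  by case: HPi => _ Pa' _ _; apply: Pa'.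
Qed.
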